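(* For every $d\ge1$ there exist constants $c_d>0$ and $\epsilon_d>0$, depending only on $d$, such that: if $S=\{x_0,\dots,x_d\}\subset\mathbb{R}^d$ satisfies $\mathrm{diam}(S)\le 1$ and $\mathtt{rad}(S)\ge(1-\epsilon)\sqrt{\frac{d}{2(d+1)}}$ for some $0<\epsilon\le\epsilon_d$, then there exists the vertex set $\Delta$ of a regular simplex of diameter (edge length) $1$ with $\mathrm{dist}_H(S,\Delta)\le c_d\,\epsilon$.
   Context: For a bounded set $A\subset\mathbb{R}^d$, $\mathtt{rad}(A)=\inf_{c\in\mathbb{R}^d}\sup_{y\in A}\|c-y\|_2$ is its Chebyshev radius and $\mathrm{diam}(A)=\sup_{x,y\in A}\|x-y\|_2$. A regular simplex of edge length $1$ is a set of $d+1$ points at pairwise distance exactly $1$. For nonempty compact $A,B\subset\mathbb{R}^d$, $\mathrm{dist}_H(A,B)=\max\{\sup_{a\in A}\inf_{b\in B}\|a-b\|_2,\ \sup_{b\in B}\inf_{a\in A}\|a-b\|_2\}$. *)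

(* Defs.v *)
From HB Require Import structures.
From mathcomp Require Import all_boot all_order all_algebra.
From mathcomp Require Import boolp classical_sets reals Rstruct.
Set Implicit Arguments. Unset Strict Implicit. Unset Printing Implicit Defensive.
Import Order.TTheory GRing.Theory Num.Theory.
Local Open Scope ring_scope.
Local Open Scope classical_set_scope.

Notation real := Rdefinitions.R.

Definition pt (d : nat) := 'rV[real]_d.

Definition enorm (d : nat) (v : pt d) : real := Num.sqrt (\sum_(i < d) (v 0 i) ^+ 2).

Definition cheb_rad (d : nat) (A : set (pt d)) : real :=
  inf [set sup [set enorm (c - y) | y in A] | c in [set: pt d]].

Definition diam (d : nat) (A : set (pt d)) : real :=
  sup [set enorm (x - y) | x in A & y in A].

Definition hdist (d : nat) (A B : set (pt d)) : real :=
  Num.max (sup [set inf [set enorm (a - b) | b in B] | a in A])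
          (sup [set inf [set enorm (a - b) | a in A] | b in B]).

Definition regular_unit_simplex (d : nat) (y : 'I_d.+1 -> pt d) : Prop :=
  forall i j : 'I_d.+1, i != j -> enorm (y i - y j) = 1.

(* Main.v *)
Require Import Defs.
From HB Require Import structures.
From mathcomp Require Import all_boot all_order all_algebra.
From mathcomp Require Import boolp classical_sets reals Rstruct.
From mathcomp Require Import ring lra.
Import Order.TTheory GRing.Theory Num.Theory.
Local Open Scope ring_scope.
Local Open Scope classical_set_scope.
Set Implicit Arguments. Unset Strict Implicit. Unset Printing Implicit Defensive.

Definition dot (d : nat) (u v : pt d) : real := \sum_(i < d) u 0 i * v 0 i.
Definition nsq (d : nat) (u : pt d) : real := dot u u.

Lemma dotC d (u v : pt d) : dot u v = dot v u.
Proof. by apply: eq_bigr => i _; rewrite mulrC. Qed.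

Lemma dotDl d (u v w : pt d) : dot (u + v) w = dot u w + dot v w.
Proof. by rewrite /dot -big_split; apply: eq_bigr => i _; rewrite !mxE mulrDl. Qed.

Lemma dotZl d a (u w : pt d) : dot (a *: u) w = a * dot u w.
Proof. by rewrite /dot mulr_sumr; apply: eq_bigr => i _; rewrite !mxE mulrA. Qed.

Lemma dotNl d (u w : pt d) : dot (- u) w = - dot u w.
Proof. by rewrite -scaleN1r dotZl mulN1r. Qed.

Lemma dotBl d (u v w : pt d) : dot (u - v) w = dot u w - dot v w.
Proof. by rewrite dotDl dotNl. Qed.

Lemma dot0l d (w : pt d) : dot 0 w = 0.
Proof. by rewrite /dot big1 // => i _; rewrite mxE mul0r. Qed.

Lemma dotDr d (u v w : pt d) : dot w (u + v) = dot w u + dot w v.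
Proof. by rewrite dotC dotDl !(dotC w). Qed.
Lemma dotZr d a (u w : pt d) : dot w (a *: u) = a * dot w u.
Proof. by rewrite dotC dotZl dotC. Qed.
Lemma dotBr d (u v w : pt d) : dot w (u - v) = dot w u - dot w v.
Proof. by rewrite dotC dotBl !(dotC w). Qed.
Lemma dot0r d (w : pt d) : dot w 0 = 0.
Proof. by rewrite dotC dot0l. Qed.

Lemma dot_suml d (I : finType) (P : pred I) (F : I -> pt d) w :
  dot (\sum_(i | P i) F i) w = \sum_(i | P i) dot (F i) w.
Proof.
elim/big_rec2: _ => [|i y1 y2 _ <-]; first by rewrite dot0l.
by rewrite dotDl.
Qed.
Lemma dot_sumr d (I : finType) (P : pred I) (F : I -> pt d) w :
  dot w (\sum_(i | P i) F i) = \sum_(i | P i) dot w (F i).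
Proof. by rewrite dotC dot_suml; apply: eq_bigr => i _; rewrite dotC. Qed.

Lemma nsq_ge0 d (u : pt d) : 0 <= nsq u.
Proof. by apply: sumr_ge0 => i _; rewrite -expr2 sqr_ge0. Qed.

Lemma enormE d (u : pt d) : enorm u = Num.sqrt (nsq u).
Proof. by rewrite /enorm /nsq /dot; congr Num.sqrt; apply: eq_bigr => i _; rewrite expr2. Qed.

Lemma enorm_ge0 d (u : pt d) : 0 <= enorm u.
Proof. by rewrite enormE sqrtr_ge0. Qed.

Lemma enorm_sq d (u : pt d) : enorm u ^+ 2 = nsq u.
Proof. by rewrite enormE sqr_sqrtr // nsq_ge0. Qed.

Lemma nsqD d (u v : pt d) : nsq (u + v) = nsq u + 2 * dot u v + nsq v.
Proof. rewrite /nsq dotDl !dotDr (dotC v u); ring. Qed.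
Lemma nsqB d (u v : pt d) : nsq (u - v) = nsq u - 2 * dot u v + nsq v.
Proof. rewrite /nsq dotBl !dotBr (dotC v u); ring. Qed.
Lemma nsqN d (u : pt d) : nsq (- u) = nsq u.
Proof. by rewrite /nsq dotNl dotC dotNl opprK. Qed.
Lemma nsqBC d (u v : pt d) : nsq (u - v) = nsq (v - u).
Proof. by rewrite -nsqN opprB. Qed.
Lemma nsqZ d a (u : pt d) : nsq (a *: u) = a ^+ 2 * nsq u.
Proof. rewrite /nsq dotZl dotZr; ring. Qed.

Lemma dot_bound d (p q : pt d) a : 0 < a ->
  `|2 * dot p q| <= a * nsq p + nsq q / a.
Proof.
move=> a0.
have h1 := nsq_ge0 (a *: p + q); have h2 := nsq_ge0 (a *: p - q).
rewrite nsqD nsqZ dotZl in h1; rewrite nsqB nsqZ dotZl in h2.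
have ha : nsq q = a * (nsq q / a) by field; rewrite gt_eqF.
move: (nsq q / a) ha h1 h2 => t -> h1 h2.
rewrite ler_norml; apply/andP; split; nra.
Qed.


Definition cen d k (f : nat -> pt d) : pt d := (k%:R)^-1 *: \sum_(j < k) f j.

Lemma sum_centered d k (f : nat -> pt d) : (0 < k)%N ->
  \sum_(j < k) (f j - cen k f) = 0.
Proof.
move=> k0; rewrite sumrB sumr_const card_ord /cen -scaler_nat scalerA.
by rewrite mulfV ?scale1r ?subrr // pnatr_eq0 -lt0n.
Qed.

Lemma gram_centered d k (f : nat -> pt d) : (0 < k)%N ->
  (forall i j, (i < k)%N -> (j < k)%N -> i != j -> nsq (f i - f j) = 1) ->
  forall i j : 'I_k, dot (f i - cen k f) (f j - cen k f) =
    (if i == j then 1/2 else 0) - 1 / (2 * k%:R).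
Proof.
move=> k0 reg.
set g := cen k f; set u := fun j : nat => f j - g.
have su : \sum_(j < k) u j = 0 by exact: sum_centered.
have kk0 : 0 < k%:R :> real by rewrite ltr0n.
have hrow : forall i : 'I_k, \sum_(j < k) nsq (u i - u j) = k%:R - 1.
  move=> i; rewrite (bigD1 i) //= subrr /nsq dot0l add0r.
  rewrite (eq_bigr (fun _ => 1)); last first.
    move=> j /negbTE ji; rewrite /u opprB addrA subrK.
    by apply: reg => //; rewrite eq_sym -(inj_eq val_inj) /= in ji *; rewrite ji.
  rewrite sumr_const cardC1 card_ord.
  by rewrite -[in RHS](prednK k0) -natr1 addrK.
set N := fun j : nat => nsq (u j).
set S := \sum_(j < k) N j.
have hrow2 : forall i : 'I_k, k%:R * N i + S = k%:R - 1.
  move=> i; rewrite -(hrow i).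
  under [RHS]eq_bigr => j _ do rewrite nsqB.
  rewrite big_split /= sumrB sumr_const card_ord -mulr_sumr -dot_sumr su dot0r mulr0 subr0.
  by rewrite mulr_natl /S /N.
have hS : S = (k%:R - 1) / 2.
  have hsum : \sum_(i < k) (k%:R * N i + S) = \sum_(i < k) (k%:R - 1 : real).
    by apply: eq_bigr => i _; rewrite hrow2.
  rewrite big_split /= -mulr_sumr !sumr_const card_ord in hsum.
  rewrite -(mulr_natr S) -(mulr_natr (k%:R - 1)) in hsum.
  have h3 : (2 * S - (k%:R - 1)) * k%:R = 0.
    move: hsum; rewrite -/S; nra.
  move/eqP: h3; rewrite mulf_eq0 (gt_eqF kk0) orbF subr_eq0 => /eqP h3.
  by rewrite -h3; field.
have e1 : (k%:R - 1) / (2 * k%:R) = 1/2 - 1 / (2 * k%:R) :> real.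
  by field; rewrite gt_eqF.
have hN : forall i : 'I_k, N i = (k%:R - 1) / (2 * k%:R).
  move=> i; have := hrow2 i; rewrite hS => h.
  apply: (mulfI (x := k%:R)); first by rewrite gt_eqF.
  have -> : k%:R * ((k%:R - 1) / (2 * k%:R)) = (k%:R - 1)/2 :> real.
    by field; rewrite gt_eqF.
  lra.
move=> i j; case: eqP => [->|/eqP ij].
  by rewrite -/(nsq (u j)) -/(N j) hN e1.
have := reg i j (ltn_ord i) (ltn_ord j) ij.
have -> : f i - f j = u i - u j by rewrite /u opprB addrA subrK.
rewrite nsqB -/(N i) -/(N j) !hN e1 => h.
rewrite -/(u i) -/(u j). lra.
Qed.


Definition perp d k (f : nat -> pt d) (a : pt d) : pt d :=
  a - 2 *: \sum_(j < k) dot a (f j - cen k f) *: (f j - cen k f).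

Definition nextpt d k (f : nat -> pt d) (p : pt d) : pt d :=
  if k is 0 then p else
  cen k f + (Num.sqrt ((k%:R + 1) / (2 * k%:R)) / Num.sqrt (nsq (perp k f (p - cen k f))))
             *: perp k f (p - cen k f).

Lemma perp_orth d k (f : nat -> pt d) a : (0 < k)%N ->
  (forall i j, (i < k)%N -> (j < k)%N -> i != j -> nsq (f i - f j) = 1) ->
  forall i : 'I_k, dot (f i - cen k f) (perp k f a) = 0.
Proof.
move=> k0 reg i; rewrite /perp dotBr dotZr dot_sumr.
under eq_bigr => j _ do rewrite dotZr (gram_centered k0 reg).
have kk0 : 0 < k%:R :> real by rewrite ltr0n.
rewrite (bigD1 i) //= eqxx.
under eq_bigr => j ji do rewrite eq_sym (negbTE ji) add0r.
rewrite -mulr_suml.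
have := congr1 (dot a) (sum_centered f k0).
rewrite dot_sumr dot0r (bigD1 i) //= => h.
have -> : \sum_(j < k | j != i) dot a (f j - cen k f) = - dot a (f i - cen k f).
  by apply/eqP; rewrite -addr_eq0 addrC h.
rewrite (dotC _ a); field; by rewrite gt_eqF.
Qed.

Lemma step_lemma d k (f : nat -> pt d) p E : (0 < k)%N -> 0 <= E ->
  E * (8 * k%:R + 4) <= 1 ->
  (forall i j, (i < k)%N -> (j < k)%N -> i != j -> nsq (f i - f j) = 1) ->
  (forall j, (j < k)%N -> `|nsq (p - f j) - 1| <= E) ->
  (forall j, (j < k)%N -> nsq (nextpt k f p - f j) = 1) /\
  nsq (p - nextpt k f p) <= (2 * k%:R + 8) * E ^+ 2.
Proof.
move=> k0 E0 Esmall reg hp.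
have kk0 : 0 < k%:R :> real by rewrite ltr0n.
have kk1 : 1 <= k%:R :> real by rewrite ler1n.
pose g := cen k f.
pose u := fun j : nat => f j - g.
pose a := p - g.
pose w := perp k f a.
pose Pa := 2 *: \sum_(j < k) dot a (u j) *: u j.
pose rho2 := (k%:R - 1) / (2 * k%:R) : real.
pose h2 := (k%:R + 1) / (2 * k%:R) : real.
have hrh : h2 = 1 - rho2 by rewrite /h2 /rho2; field; rewrite gt_eqF.
have h2ge : 1/2 <= h2 by rewrite /h2 ler_pdivlMr ?mulr_gt0 //; lra.
have gram := gram_centered k0 reg.
have nsqu : forall j : 'I_k, nsq (u j) = rho2.
  move=> j; rewrite /nsq /u gram eqxx /rho2; field; by rewrite gt_eqF.
have ortho : forall i : 'I_k, dot (u i) w = 0 by move=> i; exact: perp_orth.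
have aPw : a = Pa + w by rewrite /w /perp /Pa addrC subrK.
have Paw : dot Pa w = 0.
  rewrite /Pa dotZl dot_suml big1 ?mulr0 // => j _.
  by rewrite dotZl ortho mulr0.
have suma : \sum_(j < k) dot a (u j) = 0.
  by rewrite -dot_sumr sum_centered // dot0r.
pose e := fun j : nat => nsq (p - f j) - 1.
have pf : forall j, p - f j = a - u j.
  by move=> j; rewrite /a /u opprB addrA subrK.
have ej : forall j : 'I_k, e j = nsq a - 2 * dot a (u j) + rho2 - 1.
  by move=> j; rewrite /e pf nsqB nsqu.
pose eb := (\sum_(j < k) e j) / k%:R.
have hsume : \sum_(j < k) e j = k%:R * (nsq a + rho2 - 1).
  rewrite (eq_bigr _ (fun j _ => ej j)).
  have -> : \sum_(j < k) (nsq a - 2 * dot a (u j) + rho2 - 1) =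
            \sum_(j < k) (nsq a + rho2 - 1) - 2 * \sum_(j < k) dot a (u j).
    by rewrite mulr_sumr -sumrB; apply: eq_bigr => j _; ring.
  by rewrite suma mulr0 subr0 sumr_const card_ord mulr_natl.
have nsqa : nsq a = 1 - rho2 + eb.
  rewrite /eb hsume; field; by rewrite gt_eqF.
have dau : forall j : 'I_k, dot a (u j) = (eb - e j) / 2.
  by move=> j; rewrite ej nsqa; field.
have ebE : `|eb| <= E.
  rewrite /eb normrM normfV (ger0_norm (ltW kk0)) ler_pdivrMr //.
  apply: le_trans (ler_norm_sum _ _ _) _.
  have hs : \sum_(j < k) `|e j| <= \sum_(j < k) E.
    by apply: ler_sum => i0 _; exact: hp.
  by rewrite sumr_const card_ord -mulr_natr in hs.
have dauE : forall j : 'I_k, (dot a (u j)) ^+ 2 <= E ^+ 2.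
  move=> j; rewrite dau; have := hp j (ltn_ord j); rewrite -/(e j).
  move: ebE; rewrite !ler_norml => /andP[h1 h2'] /andP[h3 h4]; nra.
have PaE : Pa = a - w by rewrite aPw addrK.
have nsqPa : nsq Pa = 2 * \sum_(j < k) (dot a (u j)) ^+ 2.
  rewrite {1}/nsq {2}PaE dotBr Paw subr0 /Pa dotZl dot_suml.
  congr (_ * _); apply: eq_bigr => j _; rewrite dotZl dotC; ring.
have nsqPaE : nsq Pa <= 2 * k%:R * E ^+ 2.
  rewrite nsqPa -mulrA ler_pM2l //.
  have hs : \sum_(j < k) (dot a (u j)) ^+ 2 <= \sum_(j < k) E ^+ 2.
    by apply: ler_sum => i0 _; exact: dauE.
  by rewrite sumr_const card_ord -mulr_natl in hs.
have nsqw : nsq w = h2 + eb - nsq Pa.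
  have := nsqD Pa w; rewrite -aPw Paw nsqa hrh => ->; ring.
have kE : 2 * k%:R * E <= 1/4 by nra.
have Pa0 := nsq_ge0 Pa.
have E12 : E <= 1/12 by nra.
have wh : `|nsq w - h2| <= 2 * E.
  rewrite nsqw; move: ebE; rewrite !ler_norml => /andP[h1 h3].
  apply/andP; split; nra.
have w0 : 0 < nsq w.
  move: wh; rewrite ler_norml => /andP[h1 h3]; lra.
pose s := Num.sqrt (nsq w); pose t := Num.sqrt h2.
have s0 : 0 < s by rewrite /s sqrtr_gt0.
have t0 : 0 < t by rewrite /t sqrtr_gt0; lra.
have ss : s ^+ 2 = nsq w by rewrite /s sqr_sqrtr // ltW.
have tt : t ^+ 2 = h2 by rewrite /t sqr_sqrtr //; lra.
have nextE : nextpt k f p = g + (t / s) *: w.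
  by rewrite /nextpt; destruct k.
split.
  move=> j jk; pose J := Ordinal jk.
  have -> : nextpt k f p - f j = (t / s) *: w - u J.
    by rewrite nextE /u opprB addrA (addrC ((t / s) *: w)).
  rewrite nsqB nsqZ dotZl dotC ortho nsqu mulr0 mulr0 subr0.
  rewrite -ss expr_div_n tt hrh; field; by rewrite gt_eqF.
have -> : p - nextpt k f p = Pa + (1 - t / s) *: w.
  by rewrite nextE opprD addrA -/a {1}aPw scalerBl scale1r -addrA.
rewrite nsqD dotZr Paw mulr0 mulr0 addr0 (nsqZ (1 - t / s)).
have -> : (1 - t / s) ^+ 2 * nsq w = (s - t) ^+ 2.
  rewrite -ss; field; by rewrite gt_eqF.
have key : (s - t) ^+ 2 <= 2 * (s ^+ 2 - t ^+ 2) ^+ 2.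
  have st : 1/2 <= (s + t) ^+ 2 by nra.
  have h0 : 0 <= (s - t) ^+ 2 * (2 * (s + t) ^+ 2 - 1).
    by apply: mulr_ge0; [exact: sqr_ge0 | lra].
  have e9 : 2 * (s ^+ 2 - t ^+ 2) ^+ 2 - (s - t) ^+ 2 =
           (s - t) ^+ 2 * (2 * (s + t) ^+ 2 - 1) by ring.
  lra.
rewrite ss tt in key.
have : (nsq w - h2) ^+ 2 <= (2 * E) ^+ 2.
  move: wh; rewrite ler_norml => /andP[h1 h3]; nra.
move=> h. nra.
Qed.


Lemma cen_ext d k (f f' : nat -> pt d) : (forall j, (j < k)%N -> f j = f' j) ->
  cen k f = cen k f'.
Proof. by move=> H; rewrite /cen; congr (_ *: _); apply: eq_bigr => j _; apply: H. Qed.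

Lemma next_ext d k (f f' : nat -> pt d) p : (forall j, (j < k)%N -> f j = f' j) ->
  nextpt k f p = nextpt k f' p.
Proof.
move=> H; rewrite /nextpt /perp (cen_ext H).
have -> : \sum_(j < k) dot (p - cen k f') (f j - cen k f') *: (f j - cen k f') =
          \sum_(j < k) dot (p - cen k f') (f' j - cen k f') *: (f' j - cen k f').
  by apply: eq_bigr => j _; rewrite H.
by [].
Qed.

Fixpoint Yf d (X : nat -> pt d) (k : nat) : nat -> pt d :=
  match k with
  | 0 => fun _ => 0
  | k'.+1 => fun j => if (j < k')%N then Yf X k' j else nextpt k' (Yf X k') (X k')
  end.

Definition Y d (X : nat -> pt d) (j : nat) : pt d := Yf X j.+1 j.

Lemma YfE d (X : nat -> pt d) k j : (j < k)%N -> Yf X k j = Y X j.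
Proof.
elim: k j => // k IH j; rewrite ltnS leq_eqVlt => /orP[/eqP ->|jk].
  by rewrite /Y.
by rewrite /= jk IH.
Qed.

Lemma YE d (X : nat -> pt d) k : Y X k = nextpt k (Y X) (X k).
Proof. by rewrite /Y /= ltnn; apply: next_ext => j jk; rewrite YfE. Qed.

Fixpoint Bc (k : nat) : real :=
  match k with
  | 0 => 0
  | k'.+1 => Bc k' + (2 * k'%:R + 8) * (2 + 2 * Bc k') ^+ 2
  end.

Lemma Bc_ge0 k : 0 <= Bc k.
Proof.
elim: k => //= k IH; apply: addr_ge0 => //; apply: mulr_ge0; last exact: sqr_ge0.
by apply: addr_ge0; rewrite ?mulr_ge0 ?ler0n.
Qed.

Lemma Bc_mono k l : (k <= l)%N -> Bc k <= Bc l.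
Proof.
elim: l => [|l IH]; first by rewrite leqn0 => /eqP ->.
rewrite leq_eqVlt => /orP[/eqP ->//|]; rewrite ltnS => /IH h /=.
apply: (le_trans h); rewrite lerDl; apply: mulr_ge0; last exact: sqr_ge0.
by apply: addr_ge0; rewrite ?mulr_ge0 ?ler0n.
Qed.

Lemma err_bound d (P Q : pt d) dl Bk : 0 < dl -> dl <= 1 -> 0 <= Bk ->
  1 - dl <= nsq P <= 1 -> nsq Q <= Bk * dl ^+ 2 ->
  `|nsq (P + Q) - 1| <= (2 + 2 * Bk) * dl.
Proof.
move=> d0 d1 B0 /andP[h1 h2] hQ.
have hb := dot_bound P Q d0.
have hQ' : nsq Q / dl <= Bk * dl.
  by rewrite ler_pdivrMr // -mulrA -expr2.
have hQ2 : nsq Q <= Bk * dl.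
  have d1' : 0 <= 1 - dl by lra.
  have := mulr_ge0 (mulr_ge0 B0 (ltW d0)) d1'.
  move: hQ; rewrite expr2; nra.
have Q0 := nsq_ge0 Q.
rewrite nsqD; move: hb; rewrite ler_norml => /andP[h3 h4].
rewrite ler_norml; apply/andP; split; nra.
Qed.

Lemma build d (X : nat -> pt d) dl n : 0 < dl -> dl <= 1 ->
  dl * ((8 * n%:R + 4) * (2 + 2 * Bc n)) <= 1 ->
  (forall i j, (i < n.+1)%N -> (j < n.+1)%N -> i != j ->
     1 - dl <= nsq (X i - X j) <= 1) ->
  forall k, (k <= n.+1)%N ->
  (forall i j, (i < k)%N -> (j < k)%N -> i != j -> nsq (Y X i - Y X j) = 1) /\
  (forall j, (j < k)%N -> nsq (X j - Y X j) <= Bc k * dl ^+ 2).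
Proof.
move=> d0 d1 dsmall hX.
elim=> [_|k IH]; first by split.
move=> kn; have [reg bnd] := IH (ltnW kn).
have Bk0 := Bc_ge0 k.
have Bmono : Bc k <= Bc k.+1.
  by apply: Bc_mono.
case: (posnP k) => [k0|kpos].
  subst k; split.
    by move=> i j; rewrite !ltnS !leqn0 => /eqP -> /eqP ->; rewrite eqxx.
  move=> j; rewrite ltnS leqn0 => /eqP ->.
  rewrite YE /nextpt subrr /nsq dot0l; apply: mulr_ge0 => //; exact: sqr_ge0.
pose E := (2 + 2 * Bc k) * dl.
have E0 : 0 <= E by apply: mulr_ge0 => //; [lra | exact: ltW].
have Esm : E * (8 * k%:R + 4) <= 1.
  apply: le_trans dsmall; rewrite /E mulrC mulrA [X in _ <= X]mulrC.
  apply: ler_wpM2r; first exact: ltW.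
  have kn' : (k <= n)%N by rewrite -ltnS.
  have hk : k%:R <= n%:R :> real by rewrite ler_nat.
  have hB := Bc_mono kn'.
  have k0' : 0 <= k%:R :> real by rewrite ler0n.
  by apply: ler_pM; lra.
have hp : forall j, (j < k)%N -> `|nsq (X k - Y X j) - 1| <= E.
  move=> j jk.
  have -> : X k - Y X j = (X k - X j) + (X j - Y X j) by rewrite addrA subrK.
  apply: err_bound => //; last exact: bnd.
  apply: hX => //; [exact: ltn_trans jk kn | by rewrite neq_ltn jk orbT].
have [r1 r2] := step_lemma (p := X k) kpos E0 Esm reg hp.
rewrite -YE in r1 r2.
split.
  move=> i j; rewrite ltnS leq_eqVlt => /orP[/eqP ->|ik];
    rewrite ltnS leq_eqVlt => /orP[/eqP ->|jk]; rewrite ?eqxx //.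
  - by move=> _; exact: r1.
  - by move=> _; rewrite nsqBC; exact: r1.
  - by apply: reg.
move=> j; rewrite ltnS leq_eqVlt => /orP[/eqP ->|jk].
  apply: le_trans r2 _; rewrite /= /E exprMn mulrA ler_wpM2r ?sqr_ge0 //.
  rewrite lerDr; exact: Bk0.
apply: le_trans (bnd j jk) _; apply: ler_wpM2r => //; exact: sqr_ge0.
Qed.


Definition cpt d n (x : 'I_n -> pt d) (l : 'I_n -> real) : pt d :=
  \sum_i l i *: x i.
Definition Phi d n (x : 'I_n -> pt d) (l : 'I_n -> real) : real :=
  \sum_i l i * \sum_j l j * nsq (x i - x j).
Definition simplexP n (l : 'I_n -> real) := (forall i, 0 <= l i) /\ \sum_i l i = 1.

Lemma G1 d n (x : 'I_n -> pt d) l z : \sum_i l i = 1 ->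
  \sum_j l j * nsq (z - x j) =
  nsq (z - cpt x l) + \sum_j l j * nsq (cpt x l - x j).
Proof.
move=> s1; set c := cpt x l.
have e : forall j, z - x j = (z - c) + (c - x j) by move=> j; rewrite addrA subrK.
under eq_bigr => j _ do rewrite e nsqD.
have -> : \sum_j l j * (nsq (z - c) + 2 * dot (z - c) (c - x j) + nsq (c - x j)) =
   (\sum_j l j) * nsq (z - c) + 2 * dot (z - c) (\sum_j l j *: (c - x j)) +
   \sum_j l j * nsq (c - x j).
  rewrite mulr_suml dot_sumr mulr_sumr -!big_split /=; apply: eq_bigr => j _.
  by rewrite dotZr; ring.
have -> : \sum_j l j *: (c - x j) = 0.
  under eq_bigr => j _ do rewrite scalerBr.
  by rewrite sumrB -scaler_suml s1 scale1r /c /cpt subrr.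
by rewrite dot0r s1 mul1r mulr0 addr0.
Qed.

Lemma Phi_f d n (x : 'I_n -> pt d) l k : \sum_i l i = 1 ->
  nsq (x k - cpt x l) = \sum_j l j * nsq (x k - x j) - Phi x l / 2.
Proof.
move=> s1; set c := cpt x l; set psi := \sum_j l j * nsq (c - x j).
have hPhi : Phi x l = 2 * psi.
  rewrite /Phi (eq_bigr (fun i => l i * (nsq (x i - c) + psi))); last first.
    by move=> i _; rewrite G1.
  have -> : \sum_i l i * (nsq (x i - c) + psi) =
            \sum_i l i * nsq (x i - c) + (\sum_i l i) * psi.
    by rewrite mulr_suml -big_split; apply: eq_bigr => i _; rewrite mulrDr.
  have -> : \sum_i l i * nsq (x i - c) = psi.
    by apply: eq_bigr => i _; rewrite nsqBC.
  by rewrite s1; ring.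
by rewrite G1 // hPhi -/c -/psi; field.
Qed.

Lemma sum_pert n (l : 'I_n -> real) s k (F : 'I_n -> real) :
  \sum_i ((1 - s) * l i + s * (i == k)%:R) * F i = (1 - s) * \sum_i l i * F i + s * F k.
Proof.
under eq_bigr => i _ do rewrite mulrDl.
rewrite big_split /= mulr_sumr; congr (_ + _).
  by apply: eq_bigr => i _; rewrite mulrA.
rewrite (bigD1 k) //= eqxx big1 ?addr0 ?mulr1 // => i /negbTE ->.
by rewrite mulr0 mul0r.
Qed.

Lemma Phi_pert d n (x : 'I_n -> pt d) l s k :
  Phi x (fun i => (1 - s) * l i + s * (i == k)%:R) =
  (1 - s) ^+ 2 * Phi x l + 2 * s * (1 - s) * \sum_j l j * nsq (x k - x j).
Proof.
rewrite /Phi.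
under eq_bigr => i _ do rewrite sum_pert.
rewrite sum_pert subrr /nsq dot0l mulr0 addr0 -/(nsq _).
have -> : \sum_i l i * ((1 - s) * \sum_j l j * nsq (x i - x j) + s * nsq (x i - x k))
  = (1 - s) * (\sum_i l i * \sum_j l j * nsq (x i - x j)) +
    s * \sum_j l j * nsq (x k - x j).
  rewrite !mulr_sumr -big_split /=; apply: eq_bigr => i _.
  rewrite nsqBC; ring.
ring.
Qed.

Lemma sum_delta n (l : 'I_n -> real) i : \sum_j l j * (i == j)%:R = l i.
Proof.
rewrite (bigD1 i) //= eqxx mulr1 big1 ?addr0 // => j /negbTE ji.
by rewrite eq_sym ji mulr0.
Qed.

Lemma Phi_ge0 d n (x : 'I_n -> pt d) l : (forall i, 0 <= l i) -> 0 <= Phi x l.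
Proof.
move=> l0; apply: sumr_ge0 => i _; apply: mulr_ge0 => //.
by apply: sumr_ge0 => j _; apply: mulr_ge0 => //; exact: nsq_ge0.
Qed.

Lemma inner_le1 d n (x : 'I_n -> pt d) l i : simplexP l ->
  (forall i j, nsq (x i - x j) <= 1) -> \sum_j l j * nsq (x i - x j) <= 1.
Proof.
move=> [l0 l1] hD; rewrite -l1; apply: ler_sum => j _.
have := l0 j; have := hD i j; nra.
Qed.

Lemma Phi_le1 d n (x : 'I_n -> pt d) l : simplexP l ->
  (forall i j, nsq (x i - x j) <= 1) -> Phi x l <= 1.
Proof.
move=> [l0 l1] hD; rewrite /Phi -[X in _ <= X]l1; apply: ler_sum => i _.
have := l0 i; have := inner_le1 i (conj l0 l1) hD; nra.
Qed.

Lemma Phi_upper d n (x : 'I_n -> pt d) l a b : simplexP l ->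
  (forall i j, nsq (x i - x j) <= 1) -> a != b ->
  Phi x l <= 1 - \sum_i l i ^+ 2 - l a * l b * (1 - nsq (x a - x b)).
Proof.
move=> [l0 l1] hD ab.
pose T := fun i => \sum_j l j * (1 - (i == j)%:R - nsq (x i - x j)).
have TE : forall i, T i = 1 - l i - \sum_j l j * nsq (x i - x j).
  move=> i; rewrite /T.
  have -> : \sum_j l j * (1 - (i == j)%:R - nsq (x i - x j)) =
     \sum_j l j - \sum_j l j * (i == j)%:R - \sum_j l j * nsq (x i - x j).
    rewrite -!sumrB; apply: eq_bigr => j _; ring.
  by rewrite l1 sum_delta.
have Tt : forall i j, 0 <= l j * (1 - (i == j)%:R - nsq (x i - x j)).
  move=> i j; apply: mulr_ge0 => //; case: eqP => [->|_].
    by rewrite (subrr (x j)) /nsq dot0l /=; lra.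
  by have := hD i j; rewrite /= ?mulr0n; lra.
have Tge : forall i, 0 <= T i by move=> i; apply: sumr_ge0 => j _.
have Ta : l b * (1 - nsq (x a - x b)) <= T a.
  rewrite /T (bigD1 b) //= (negbTE ab) subr0 lerDl.
  by apply: sumr_ge0 => j _.
have hsum : \sum_i l i * T i = 1 - \sum_i l i ^+ 2 - Phi x l.
  rewrite /Phi (eq_bigr _ (fun i _ => congr1 (fun y => l i * y) (TE i))).
  rewrite -l1 -!sumrB l1; apply: eq_bigr => i _; ring.
have : l a * T a <= \sum_i l i * T i.
  rewrite (bigD1 a) //= lerDl; apply: sumr_ge0 => i _; exact: mulr_ge0.
rewrite hsum => h.
have := ler_wpM2l (l0 a) Ta; lra.
Qed.

Lemma var_bound n (l : 'I_n -> real) a : \sum_i l i = 1 ->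
  (l a - n%:R^-1) ^+ 2 <= \sum_i l i ^+ 2 - n%:R^-1.
Proof.
move=> l1.
have n0 : (0 < n)%N by case: n a l l1 => [[]|].
have nn0 : 0 < n%:R :> real by rewrite ltr0n.
pose c := n%:R^-1 : real.
have -> : \sum_i l i ^+ 2 - c = \sum_i (l i - c) ^+ 2.
  have -> : \sum_i (l i - c) ^+ 2 = \sum_i l i ^+ 2 - 2 * c * \sum_i l i + \sum_(i < n) c ^+ 2.
    rewrite mulr_sumr -sumrB -big_split /=; apply: eq_bigr => i _; ring.
  rewrite l1 sumr_const card_ord -mulr_natl /c; field; by rewrite gt_eqF.
rewrite (bigD1 a) //= lerDl; apply: sumr_ge0 => i _; exact: sqr_ge0.
Qed.

Lemma simplex_pert n (l : 'I_n -> real) s k : simplexP l -> 0 <= s -> s <= 1 ->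
  simplexP (fun i => (1 - s) * l i + s * (i == k)%:R).
Proof.
move=> [l0 l1] s0 s1; split.
  move=> i; apply: addr_ge0; first by apply: mulr_ge0 => //; lra.
  by apply: mulr_ge0 => //; case: (i == k).
have := sum_pert l s k (fun _ => 1).
under eq_bigr => i _ do rewrite mulr1.
move=> ->; under eq_bigr => i _ do rewrite mulr1.
by rewrite l1; ring.
Qed.

Lemma arith1 (e s P A f : real) : 0 < e -> e <= 1 -> s - e * e < P ->
  (1 - e) ^+ 2 * P + 2 * e * (1 - e) * A <= s -> f = A - P / 2 -> A <= 1 ->
  0 <= P -> f <= P / 2 + 2 * e.
Proof.
move=> e0 e1 hy hup hA Ak P0.
have f1 : f <= 1 by lra.
have hup' : (1 - e) ^+ 2 * P + 2 * e * (1 - e) * A < P + e * e by lra.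
rewrite hA in f1 *.
have h2 : 2 * e * (1 - e) * (A - P / 2) < e * P + e * e by nra.
have h3 : 2 * (1 - e) * (A - P / 2) < P + e.
  by rewrite -(ltr_pM2l e0); nra.
nra.
Qed.

Lemma arith2 (e nn c R2 Q P la lb t : real) : 0 < e -> e <= 1 ->
  e * (24 * nn ^+ 2) <= 1 -> c * nn = 1 -> 0 < c -> 2 * R2 = 1 - c -> 0 <= R2 ->
  (1 - e) ^+ 2 * R2 <= P / 2 + 2 * e -> P <= 1 - Q - la * lb * t ->
  (la - c) ^+ 2 <= Q - c -> (lb - c) ^+ 2 <= Q - c -> 0 <= t -> 0 <= la -> 0 <= lb ->
  t <= 24 * nn ^+ 2 * e.
Proof.
move=> e0 e1 esm cnn c0 R2E R20 rP up va vb t0 la0 lb0.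
have lab : 0 <= la * lb * t by rewrite mulr_ge0 // mulr_ge0.
have key : 1 - c - 2 * ((1 - e) ^+ 2 * R2) <= 2 * e.
  have R21 : R2 <= 1/2 by lra.
  have h : 0 <= (1/2 - R2) * (e * (2 - e)) by apply: mulr_ge0; [lra | apply: mulr_ge0; lra].
  rewrite -R2E; nra.
have ha : (la - c) ^+ 2 <= 6 * e by lra.
have hb : (lb - c) ^+ 2 <= 6 * e by lra.
have habt : la * lb * t <= 6 * e by have := sqr_ge0 (la - c); lra.
have six : 6 * e <= c ^+ 2 / 4.
  have h : 6 * e * nn ^+ 2 <= 1/4 by lra.
  have -> : 6 * e = c ^+ 2 * (6 * e * nn ^+ 2).
    have : (c * nn) ^+ 2 = 1 by rewrite cnn expr1n.
    rewrite exprMn => h2; rewrite mulrCA -mulrA h2 mulr1 //.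
  have := ler_wpM2l (sqr_ge0 c) h; lra.
have la2 : c / 2 <= la by nra.
have lb2 : c / 2 <= lb by nra.
have lalb : c ^+ 2 / 4 <= la * lb.
  have hc2 : 0 <= c / 2 by lra.
  have := ler_pM hc2 hc2 la2 lb2.
  have -> : c / 2 * (c / 2) = c ^+ 2 / 4 by rewrite expr2; field.
  by [].
have h : t * (c ^+ 2 / 4) <= 6 * e by nra.
have h4 : 0 <= 4 * nn ^+ 2 by rewrite mulr_ge0 ?sqr_ge0.
have := ler_wpM2r h4 h.
have -> : t * (c ^+ 2 / 4) * (4 * nn ^+ 2) = t * (c * nn) ^+ 2 by field.
rewrite cnn expr1n mulr1; lra.
Qed.

Lemma jung_stab d (x : 'I_d.+1 -> pt d) e :
  0 < e -> e * (24 * (d.+1)%:R ^+ 2) <= 1 ->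
  (forall i j, nsq (x i - x j) <= 1) ->
  (forall c M, (forall i, nsq (c - x i) <= M) ->
      (1 - e) ^+ 2 * (d%:R / (2 * (d.+1)%:R)) <= M) ->
  forall a b, a != b -> 1 - 24 * (d.+1)%:R ^+ 2 * e <= nsq (x a - x b).
Proof.
move=> e0 esm hD hC a b ab.
set nn := (d.+1)%:R : real.
have nn1 : 1 <= nn by rewrite /nn ler1n.
have dnn : d%:R = nn - 1 :> real by rewrite /nn -natr1 addrK.
set R2 := d%:R / (2 * nn).
have R2E : 2 * R2 = 1 - nn^-1 :> real by rewrite /R2 dnn; field; rewrite gt_eqF //; lra.
have R20 : 0 <= R2 by rewrite /R2 divr_ge0 ?ler0n //; lra.
have cpos : 0 < nn^-1 by rewrite invr_gt0; lra.
have unif : simplexP (fun _ : 'I_d.+1 => nn^-1).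
  split=> [i|]; first exact: ltW.
  by rewrite sumr_const card_ord -mulr_natl -/nn mulfV // gt_eqF //; lra.
have nnE : (d.+1)%:R = nn by [].
have R2E' : d%:R / (2 * nn) = R2 by [].
rewrite nnE in esm hC *; rewrite R2E' in hC.
clearbody nn R2.
have R21 : R2 <= 1/2 by lra.
have e1 : e <= 1.
  have : 24 * nn ^+ 2 >= 1 by nra.
  move=> h; nra.
pose S := [set Phi x l | l in @simplexP d.+1].
have hS : has_sup S.
  split; first by exists (Phi x (fun _ => nn^-1)); exists (fun _ => nn^-1).
  by exists 1 => y [l hl <-]; exact: Phi_le1.
have [y [l hl <-] hy] := sup_adherent (mulr_gt0 e0 e0) hS.
have [l0 l1] := hl.
have fk : forall k, nsq (x k - cpt x l) <= Phi x l / 2 + 2 * e.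
  move=> k.
  have hmu := simplex_pert k hl (ltW e0) e1.
  have := sup_upper_bound hS (ex_intro2 _ _ _ hmu erefl).
  rewrite Phi_pert => hup.
  apply: arith1 e1 hy hup _ (inner_le1 k hl hD) (Phi_ge0 x l0) => //.
  exact: Phi_f.
have rP : (1 - e) ^+ 2 * R2 <= Phi x l / 2 + 2 * e.
  apply: (hC (cpt x l)) => i; rewrite nsqBC; exact: fk.
have up := Phi_upper hl hD ab.
have va := var_bound a l1; have vb := var_bound b l1.
rewrite nnE in va vb.
have t0 : 0 <= 1 - nsq (x a - x b) by have := hD a b; lra.
have cnn : nn^-1 * nn = 1 by rewrite mulVf // gt_eqF //; lra.
have := arith2 e0 e1 esm cnn cpos R2E R20 rP up va vb t0 (l0 a) (l0 b).
lra.
Qed.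


Lemma diam_bound d n (x : 'I_n -> pt d) : diam (range x) <= 1 ->
  forall i j, nsq (x i - x j) <= 1.
Proof.
move=> hd i j.
have hs : has_sup [set enorm (u - v) | u in range x & v in range x].
  split; first by exists (enorm (x i - x j)); exists (x i) => //; exists (x j).
  exists (\sum_i0 \sum_j0 enorm (x i0 - x j0)) => z [u [i0 _ <-] [v [j0 _ <-] <-]].
  rewrite (bigD1 i0) //= (bigD1 j0) //= -addrA lerDl.
  apply: addr_ge0; apply: sumr_ge0 => k _; last by apply: sumr_ge0 => l _; exact: enorm_ge0.
  exact: enorm_ge0.
have := sup_upper_bound hs.
move=> /(_ (enorm (x i - x j))) h.
have h1 : enorm (x i - x j) <= 1.
  apply: le_trans (h _) hd; exists (x i) => //; exists (x j) => //.
rewrite -enorm_sq; have := enorm_ge0 (x i - x j); nra.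
Qed.

Lemma cheb_bound d n (x : 'I_n.+1 -> pt d) r : 0 <= r -> r <= cheb_rad (range x) ->
  forall c M, (forall i, nsq (c - x i) <= M) -> r ^+ 2 <= M.
Proof.
move=> r0 hr c M hM.
have M0 : 0 <= M by apply: le_trans (hM ord0); exact: nsq_ge0.
pose Sc := fun c : pt d => [set enorm (c - y) | y in range x].
have hsup : forall c, has_sup (Sc c).
  move=> c0; split; first by exists (enorm (c0 - x ord0)); exists (x ord0) => //; exists ord0.
  exists (\sum_i enorm (c0 - x i)) => z [y [i _ <-] <-].
  rewrite (bigD1 i) //= lerDl; apply: sumr_ge0 => k _; exact: enorm_ge0.
have sup0 : forall c, 0 <= sup (Sc c).
  move=> c0; apply: le_trans (enorm_ge0 (c0 - x ord0)) _.
  apply: sup_upper_bound (hsup c0) _ _.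
  by exists (x ord0) => //; exists ord0.
have hinf : cheb_rad (range x) <= sup (Sc c).
  rewrite /cheb_rad; apply: ge_inf; first by exists 0 => z [c0 _ <-]; exact: sup0.
  by exists c.
have hs : sup (Sc c) <= Num.sqrt M.
  apply: ge_sup; first by exists (enorm (c - x ord0)); exists (x ord0) => //; exists ord0.
  move=> z [y [i _ <-] <-]; rewrite enormE ler_sqrt //; exact: hM.
have : r <= Num.sqrt M by apply: le_trans hr (le_trans hinf hs).
move=> h; have := sqrtr_ge0 M; have := sqr_sqrtr M0; nra.
Qed.

Lemma hdist_bound d n (x y : 'I_n.+1 -> pt d) m :
  (forall i, enorm (x i - y i) <= m) -> hdist (range x) (range y) <= m.
Proof.
move=> hm.
have lb : forall (S : set (pt d)) (f : pt d -> real), (forall z, 0 <= f z) ->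
    has_lbound [set f z | z in S].
  by move=> S f f0; exists 0 => _ [z _ <-].
rewrite /hdist ge_max; apply/andP; split.
  apply: ge_sup.
    by exists (inf [set enorm (x ord0 - b) | b in range y]); exists (x ord0) => //; exists ord0.
  move=> z [a [i _ <-] <-]; apply: le_trans (hm i).
  apply: ge_inf; first by apply: lb => w; exact: enorm_ge0.
  by exists (y i) => //; exists i.
apply: ge_sup.
  by exists (inf [set enorm (a - y ord0) | a in range x]); exists (y ord0) => //; exists ord0.
move=> z [b [i _ <-] <-]; apply: le_trans (hm i).
apply: ge_inf; first by apply: lb => w; exact: enorm_ge0.
by exists (x i) => //; exists i.
Qed.


Unset Implicit Arguments.

Theorem mainTheorem8 (d : nat) (hd : (1 <= d)%N) :
  exists (c_d eps_d : real), 0 < c_d /\ 0 < eps_d /\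
    forall (eps : real) (x : 'I_d.+1 -> pt d),
      0 < eps -> eps <= eps_d ->
      diam (range x) <= 1 ->
      cheb_rad (range x) >= (1 - eps) * Num.sqrt (d%:R / (2 * (d.+1)%:R)) ->
      exists y : 'I_d.+1 -> pt d,
        regular_unit_simplex y /\ hdist (range x) (range y) <= c_d * eps.
Proof.
have nn1 : 1 <= (d.+1)%:R :> real by rewrite ler1n.
have d0 : 0 <= d%:R :> real by rewrite ler0n.
have B0 := Bc_ge0 d; have B1 := Bc_ge0 d.+1.
pose K := 24 * (d.+1)%:R ^+ 2 : real.
pose W := (8 * d%:R + 4) * (2 + 2 * Bc d) : real.
have W1 : 1 <= W by rewrite /W; nra.
have K1 : 1 <= K by rewrite /K; nra.
have KW0 : 0 < K * W by apply: mulr_gt0; lra.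
exists ((Bc d.+1 + 1) * K), (1 / (K * W)).
split; first by apply: mulr_gt0; lra.
split; first by rewrite divr_gt0 //.
move=> eps x e0 ele hdiam hcheb.
have hD := diam_bound hdiam.
have eKW : eps * K * W <= 1.
  by move: ele; rewrite ler_pdivlMr // mulrA.
have eK : eps * K <= 1 by nra.
have e1 : eps <= 1 by nra.
have R20 : 0 <= d%:R / (2 * (d.+1)%:R) :> real by rewrite divr_ge0 //; lra.
have hC : forall c M, (forall i, nsq (c - x i) <= M) ->
    (1 - eps) ^+ 2 * (d%:R / (2 * (d.+1)%:R)) <= M.
  move=> c M hM.
  have r0 : 0 <= (1 - eps) * Num.sqrt (d%:R / (2 * (d.+1)%:R)).
    by apply: mulr_ge0; [lra | exact: sqrtr_ge0].
  have := cheb_bound r0 hcheb hM.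
  by rewrite exprMn sqr_sqrtr.
have hst := jung_stab e0 eK hD hC.
pose X := fun j : nat => x (inord j).
pose dl := K * eps.
have dl0 : 0 < dl by rewrite /dl mulr_gt0 //; lra.
have dl1 : dl <= 1 by rewrite /dl mulrC.
have dsm : dl * ((8 * d%:R + 4) * (2 + 2 * Bc d)) <= 1.
  by rewrite -/W /dl (mulrC K).
have hX : forall i j, (i < d.+1)%N -> (j < d.+1)%N -> i != j ->
    1 - dl <= nsq (X i - X j) <= 1.
  move=> i j hi hj ij; apply/andP; split; last exact: hD.
  rewrite /dl /K; apply: hst.
  by apply: contra ij => /eqP /(congr1 val) /=; rewrite !inordK // => ->.
have [reg bnd] := build dl0 dl1 dsm hX (leqnn d.+1).
exists (fun i : 'I_d.+1 => Y X i).
split.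
  move=> i j ij; rewrite enormE reg ?ltn_ord ?sqrtr1 //.
apply: hdist_bound => i.
have -> : x i = X i by rewrite /X inord_val.
rewrite enormE.
have hb := bnd i (ltn_ord i).
have -> : (Bc d.+1 + 1) * K * eps = (Bc d.+1 + 1) * dl by rewrite /dl mulrA.
move: (Bc d.+1) B1 hb => B B1' hb.
clearbody dl.
have hB : B <= (B + 1) ^+ 2 by nra.
have h2 : B * dl ^+ 2 <= ((B + 1) * dl) ^+ 2.
  have h := ler_wpM2r (sqr_ge0 dl) hB; rewrite exprMn; exact: h.
have p0 : 0 <= (B + 1) * dl by apply: mulr_ge0; lra.
apply: le_trans (_ : Num.sqrt (((B + 1) * dl) ^+ 2) <= _).
  rewrite ler_sqrt; last exact: sqr_ge0.
  exact: le_trans hb h2.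
by rewrite sqrtr_sqr ger0_norm.
Qed.
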